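(* Let $x,y$ be Boolean strings with $|y|\ge1$, and let $w=xy0$. Then $\mu_x(y0)\le 0$ if $\rho(xy)>\mu_x(y)=0$, and $\mu_x(y0)\le\mu_x(y)-1$ otherwise.
   Context: Characteristic strings and forks. A characteristic string is $w=w_1\dots w_n\in\{0,1\}^n$; index $i$ is honest if $w_i=0$ and adversarial if $w_i=1$. A fork for $w$ is a rooted tree with edges directed away from the root $r$ and labeling $\ell:V\to\{0,\dots,n\}$ with (F1) $\ell(r)=0$; (F2) labels strictly increasing along directed paths; (F3) each honest index labels exactly one vertex; (F4) for honest $i<j$ the vertex labeled $i$ has strictly smaller depth than the vertex labeled $j$. Write $F\vdash w$. A vertex is honest if it is the root or labeled by an honest index. A tine is a directed path from the root; its length is its number of edges, $\ell(t)$ the label of its last vertex. A fork is closed if every leaf is honest; a closed fork has a unique longest tine $\hat t$. For closed $F\vdash w$ and tine $t$: $\mathrm{gap}(t)=\mathrm{length}(\hat t)-\mathrm{length}(t)$, $\mathrm{reserve}(t)=|\{i:w_i=1,\ i>\ell(t)\}|$, $\mathrm{reach}(t)=\mathrm{reserve}(t)-\mathrm{gap}(t)$; $\rho(F)=\max_t\mathrm{reach}(t)$, $\rho(w)=\max\{\rho(F):F\vdash w\text{ closed}\}$. For $w=xy$, tines are disjoint over $y$ if they share no edge terminating at a vertex with label $>|x|$ (a tine may be paired with itself). $\mu_x(F)=\max\min\{\mathrm{reach}(t_1),\mathrm{reach}(t_2)\}$ over pairs disjoint over $y$, and $\mu_x(y)=\max\{\mu_x(F):F\vdash xy\text{ closed}\}$.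 *)

(* Defs.v *)
From Stdlib Require Import ClassicalEpsilon.
From mathcomp Require Import all_boot all_order all_algebra.
Set Implicit Arguments. Unset Strict Implicit. Unset Printing Implicit Defensive.
Import Order.TTheory GRing.Theory Num.Theory.

(* Characteristic strings: w : seq bool, w_i = nth false w i.-1 for 1 <= i <= size w;
   true encodes 1 (adversarial), false encodes 0 (honest). *)
Definition adv (w : seq bool) (i : nat) : bool := nth false w i.-1.
Definition honest_idx (w : seq bool) (i : nat) : bool := ~~ adv w i.

(* The greatest element of a set of integers (chosen classically);
   meaningful when the set has a greatest element. *)
Definition maxZ (P : int -> Prop) : int :=
  epsilon (inhabits 0%R) (fun m => P m /\ forall k, P k -> (k <= m)%R).

(* A (labelled rooted) tree: vertices are 0 .. fsize, vertex 0 is the root,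
   fpar v is the parent of vertex v > 0 (numbered so that fpar v < v, a
   topological numbering which exists for every finite rooted tree),
   and flab is the labelling. *)
Record fork := Fork { fsize : nat; fpar : nat -> nat; flab : nat -> nat }.

Definition vertex (F : fork) (v : nat) : bool := v <= fsize F.

Fixpoint depth_aux (par : nat -> nat) (fuel v : nat) : nat :=
  match fuel with
  | 0 => 0
  | f.+1 => if v == 0 then 0 else (depth_aux par f (par v)).+1
  end.
Definition depth (F : fork) (v : nat) : nat := depth_aux (fpar F) v v.

Fixpoint on_path_aux (par : nat -> nat) (fuel v u : nat) : bool :=
  (v == u) ||
  match fuel with
  | 0 => false
  | f.+1 => if v == 0 then false else on_path_aux par f (par v) u
  end.
Definition on_tine (F : fork) (t u : nat) : bool := on_path_aux (fpar F) t t u.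

Definition is_fork (w : seq bool) (F : fork) : Prop :=
  (forall v, 0 < v -> vertex F v -> fpar F v < v) /\
  [/\
      (forall v, vertex F v -> flab F v <= size w),
      flab F 0 = 0,
      (forall v, 0 < v -> vertex F v -> flab F (fpar F v) < flab F v),
      (forall i, 1 <= i <= size w -> honest_idx w i ->
         count (fun v => flab F v == i) (iota 0 (fsize F).+1) = 1) &
      (forall u v, vertex F u -> vertex F v ->
         1 <= flab F u -> honest_idx w (flab F u) -> honest_idx w (flab F v) ->
         flab F u < flab F v -> depth F u < depth F v)].

Definition honest_vertex (w : seq bool) (F : fork) (v : nat) : bool :=
  (v == 0) || honest_idx w (flab F v).

Definition leaf (F : fork) (v : nat) : Prop :=
  vertex F v /\ forall u, 0 < u -> vertex F u -> fpar F u <> v.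

Definition closed (w : seq bool) (F : fork) : Prop :=
  forall v, leaf F v -> honest_vertex w F v.

(* Tines are identified with their last vertex t; length(t) = depth t,
   l(t) = flab F t. *)
Definition height (F : fork) : nat := \max_(v < (fsize F).+1) depth F v.

Definition gap (F : fork) (t : nat) : nat := height F - depth F t.

Definition reserve (w : seq bool) (F : fork) (t : nat) : nat :=
  count (fun i => adv w i && (flab F t < i)) (iota 1 (size w)).

Definition reach (w : seq bool) (F : fork) (t : nat) : int :=
  ((reserve w F t)%:Z - (gap F t)%:Z)%R.

Definition rho_fork (w : seq bool) (F : fork) : int :=
  maxZ (fun r => exists t, vertex F t /\ r = reach w F t).

Definition rho (w : seq bool) : int :=
  maxZ (fun r => exists F, [/\ is_fork w F, closed w F & r = rho_fork w F]).

(* tines t1 t2 are disjoint over y, where k = |x|: they share no edge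
   terminating at a vertex with label > k (the edge terminating at u > 0 is
   (fpar u, u), and it lies on a tine iff u does). *)
Definition disjoint_over (k : nat) (F : fork) (t1 t2 : nat) : Prop :=
  forall u, 0 < u -> vertex F u -> k < flab F u -> ~~ (on_tine F t1 u && on_tine F t2 u).

Definition mu_fork (x y : seq bool) (F : fork) : int :=
  maxZ (fun r => exists t1 t2, [/\ vertex F t1, vertex F t2,
          disjoint_over (size x) F t1 t2 &
          r = Order.min (reach (x ++ y) F t1) (reach (x ++ y) F t2)]).

Definition mu (x y : seq bool) : int :=
  maxZ (fun r => exists F, [/\ is_fork (x ++ y) F, closed (x ++ y) F & r = mu_fork x y F]).

(* Main.v *)
Require Import Defs.
From mathcomp Require Import all_boot all_order all_algebra.
Import Order.TTheory GRing.Theory Num.Theory.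
From mathcomp Require Import zify.
From Stdlib Require Import ClassicalEpsilon Classical.
Set Implicit Arguments. Unset Strict Implicit. Unset Printing Implicit Defensive.


Lemma maxZP (P : int -> Prop) :
  (exists m, P m /\ forall k, P k -> (k <= m)%R) ->
  P (maxZ P) /\ forall k, P k -> (k <= maxZ P)%R.
Proof. move=> H; rewrite /maxZ; exact: (epsilon_spec (inhabits 0%R) _ H). Qed.

Lemma bounded_max (P : int -> Prop) a (B : int) :
  P a -> (forall k, P k -> (k <= B)%R) ->
  exists m, P m /\ forall k, P k -> (k <= m)%R.
Proof.
move=> Pa HB.
have aB := HB a Pa.
have: forall n : nat, forall a, P a -> (forall k, P k -> (k <= a + n%:Z)%R) ->
  exists m, P m /\ forall k, P k -> (k <= m)%R.
  elim=> [|n IH] b Pb Hb.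
    by exists b; split=> // k /Hb; rewrite addr0.
  case: (classic (exists k, P k /\ (b + n%:Z < k)%R)) => [[k [Pk Hk]]|Hn].
    exists k; split=> // k' /Hb Hk'; lia.
  apply: (IH b Pb) => k Pk; case: (lerP k (b + n%:Z)) => // Hk.
  by exfalso; apply: Hn; exists k.
move/(_ (absz (B - a)) a Pa); apply=> k /HB; lia.
Qed.

Definition dec (F : fork) := forall v, 0 < v -> vertex F v -> fpar F v < v.

Lemma depth_auxE par f g v : (forall u, 0 < u -> u <= v -> par u < u) ->
  v <= f -> v <= g -> depth_aux par f v = depth_aux par g v.
Proof.
elim: f g v => [|f IH] [|g] v Hd Hf Hg /=.
- by [].
- by have -> : v = 0 by lia.
- by have -> : v = 0 by lia.
case: eqP => // /eqP v0; congr S; apply: IH.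
- move=> u u0 uv; apply: (Hd) => //; have := Hd v; lia.
- have := Hd v; lia.
- have := Hd v; lia.
Qed.

Lemma depthE F v : dec F -> vertex F v ->
  depth F v = if v == 0 then 0 else (depth F (fpar F v)).+1.
Proof.
move=> D Vv; rewrite /depth; case: v Vv => [|v] Vv //=.
congr S; apply: depth_auxE.
- move=> u u0 uv; apply: (D) => //; have := D v.+1 isT Vv; rewrite /vertex in Vv *; lia.
- have := D v.+1 isT Vv; lia.
- by [].
Qed.

Inductive anc (F : fork) : nat -> nat -> Prop :=
| anc0 v : anc F v v
| ancS v u : 0 < v -> anc F (fpar F v) u -> anc F v u.

Lemma on_path_anc F f v u : on_path_aux (fpar F) f v u -> anc F v u.
Proof.
elim: f v => [|f IH] v /=.
  by rewrite orbF => /eqP ->; constructor.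
case/orP=> [/eqP ->|]; first by constructor.
case: eqP => // /eqP v0 /IH; apply: ancS; lia.
Qed.

Lemma vertex_par F v : dec F -> 0 < v -> vertex F v -> vertex F (fpar F v).
Proof. move=> D v0 Vv; have := D v v0 Vv; rewrite /vertex in Vv *; lia. Qed.

Lemma anc_on_path F v u : dec F -> anc F v u ->
  forall f, v <= f -> vertex F v -> on_path_aux (fpar F) f v u.
Proof.
move=> D; elim=> [w|w u' w0 _ IH] [|f] Hf Vw /=.
- by rewrite eqxx.
- by rewrite eqxx.
- lia.
apply/orP; right; have -> : (w == 0) = false by apply/eqP; lia.
apply: IH; last exact: vertex_par.
have := D w w0 Vw; lia.
Qed.

Lemma on_tineP F t u : dec F -> vertex F t -> on_tine F t u <-> anc F t u.
Proof.
move=> D Vt; split; first exact: on_path_anc.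
by move=> A; apply: anc_on_path.
Qed.

Lemma anc_trans F a b c : anc F a b -> anc F b c -> anc F a c.
Proof. elim=> // v u v0 _ IH /IH; exact: ancS. Qed.

Lemma anc_vertex F t u : dec F -> anc F t u -> vertex F t -> vertex F u.
Proof. move=> D; elim=> // v u' v0 _ IH Vv; apply: IH; exact: vertex_par. Qed.

Lemma anc_depth F t u : dec F -> anc F t u -> vertex F t -> depth F u <= depth F t.
Proof.
move=> D; elim=> // v u' v0 _ IH Vv.
rewrite (depthE D Vv); have -> : (v == 0) = false by apply/eqP; lia.
have := IH (vertex_par D v0 Vv); lia.
Qed.

Lemma anc_le F t u : dec F -> anc F t u -> vertex F t -> u <= t.
Proof.
move=> D; elim=> // v u' v0 _ IH Vv.
have := IH (vertex_par D v0 Vv); have := D v v0 Vv; lia.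
Qed.

Lemma anc_leaf F t h : dec F -> anc F t h -> vertex F t -> leaf F h -> t = h.
Proof.
move=> D; elim=> // v u v0 A IH Vv [Vh Lh].
have := IH (vertex_par D v0 Vv) (conj Vh Lh) => E.
by exfalso; apply: (Lh v).
Qed.

Lemma height_ge F v : vertex F v -> depth F v <= height F.
Proof.
move=> Vv; rewrite /height.
have Hv : v < (fsize F).+1 by [].
exact: (@leq_bigmax _ (fun i : 'I_(fsize F).+1 => depth F i) (Ordinal Hv)).
Qed.

Lemma height_ex F : exists z, vertex F z /\ depth F z = height F.
Proof.
rewrite /height; have [i0 ->] := @bigop.eq_bigmax _ (fun i : 'I_(fsize F).+1 => depth F i) (ltac:(by rewrite card_ord)).
by exists i0; split=> //; rewrite /vertex -ltnS.
Qed.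


Definition bmp s i := if i < s then i else i.+1.
Definition unb s j := if j < s then j else j.-1.
Definition del F s := Fork (fsize F).-1 (fun i => unb s (fpar F (bmp s i)))
  (fun i => flab F (bmp s i)).

Lemma bmp0 s : 0 < s -> bmp s 0 = 0.
Proof. by rewrite /bmp => ->. Qed.
Lemma bmpK s i : unb s (bmp s i) = i.
Proof. rewrite /bmp /unb; case: (ltnP i s) => H; case: ltnP => H'; lia. Qed.
Lemma unbK s j : j != s -> bmp s (unb s j) = j.
Proof. rewrite /bmp /unb => /eqP H; case: (ltnP j s) => H1; case: ltnP => H'; lia. Qed.
Lemma bmp_ltE s i j : (bmp s i < bmp s j) = (i < j).
Proof. rewrite /bmp; case: (ltnP i s); case: (ltnP j s) => ? ?; apply/idP/idP; lia. Qed.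
Lemma bmp_inj s : injective (bmp s).
Proof. by move=> i j E; rewrite -(bmpK s i) E bmpK. Qed.
Lemma bmp_pos s i : 0 < s -> (0 < bmp s i) = (0 < i).
Proof. move=> s0; rewrite /bmp; case: (ltnP i s) => ?; apply/idP/idP; lia. Qed.
Lemma bmp_neq s i : bmp s i != s.
Proof. rewrite /bmp; case: ltnP => ?; apply/eqP; lia. Qed.

Section Del.
Variables (F : fork) (s : nat).
Hypotheses (s0 : 0 < s) (Vs : vertex F s) (D : dec F)
  (Ls : forall u, 0 < u -> vertex F u -> fpar F u <> s).

Lemma vertex_del i : vertex (del F s) i = vertex F (bmp s i).
Proof. move: Vs; rewrite /vertex /bmp /=; case: ltnP => ? ?; apply/idP/idP; lia. Qed.

Lemma par_del i : vertex (del F s) i -> 0 < i ->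
  bmp s (fpar (del F s) i) = fpar F (bmp s i).
Proof.
rewrite vertex_del => Vi i0 /=; apply: unbK; apply/eqP; apply: Ls => //.
by rewrite bmp_pos.
Qed.

Lemma dec_del : dec (del F s).
Proof.
move=> i i0 Vi; rewrite -(bmp_ltE s) par_del //; apply: D; last by rewrite -vertex_del.
by rewrite bmp_pos.
Qed.

Lemma depth_del i : vertex (del F s) i -> depth (del F s) i = depth F (bmp s i).
Proof.
elim/ltn_ind: i => i IH Vi.
rewrite (depthE dec_del Vi) (depthE D (_ : vertex F (bmp s i))) -?vertex_del //.
case: (posnP i) => [->|i0]; first by rewrite bmp0.
have -> : (bmp s i == 0) = false by apply/eqP => E; move: i0; rewrite -(bmp_pos _ s0) E.
rewrite IH ?par_del //; [exact: dec_del | exact: vertex_par dec_del i0 Vi].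
Qed.

Lemma anc_del_aux a b : anc F a b -> forall i j, vertex (del F s) i ->
  a = bmp s i -> b = bmp s j -> anc (del F s) i j.
Proof.
elim=> [v|v u v0 A IH] i' j Vi ea eb.
  by rewrite ea in eb; rewrite (bmp_inj eb); constructor.
have i0 : 0 < i' by rewrite -(bmp_pos _ s0) -ea.
apply: ancS => //; apply: IH => //; first exact: vertex_par dec_del i0 Vi.
by rewrite par_del // ea.
Qed.

Lemma anc_del i j : vertex (del F s) i ->
  anc (del F s) i j <-> anc F (bmp s i) (bmp s j).
Proof.
move=> Vi; split.
  move=> A; elim: A Vi => [v|v u v0 A IH] Vv; first by constructor.
  apply: ancS; first by rewrite bmp_pos.
  rewrite -par_del //; apply: IH; exact: vertex_par dec_del v0 Vv.
move=> A; apply: (anc_del_aux A) => //.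
Qed.
End Del.


Lemma count_bmp (p : pred nat) s N : s <= N ->
  count p (iota 0 N.+1) = count (fun v => p (bmp s v)) (iota 0 N) + p s.
Proof.
move=> sN.
have E1 : iota 0 N = iota 0 s ++ iota s (N - s) by rewrite -iotaD subnKC.
have E2 : iota 0 N.+1 = iota 0 s ++ s :: iota s.+1 (N - s).
  by rewrite -[N.+1](subnKC (leqW sN)) iotaD subSn.
rewrite E1 E2 !count_cat /=.
have -> : count (fun v => p (bmp s v)) (iota 0 s) = count p (iota 0 s).
  apply: eq_in_count => v; rewrite mem_iota /bmp => /andP [_ H].
  by rewrite add0n in H; rewrite H.
have -> : count (fun v => p (bmp s v)) (iota s (N - s)) = count p (iota s.+1 (N - s)).
  rewrite -add1n iotaDl count_map; apply: eq_in_count => v.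
  rewrite mem_iota /bmp => /andP [H _]; rewrite ltnNge H /=; by rewrite add1n.
lia.
Qed.

Lemma del_fork F s w' w : is_fork w' F -> 0 < s -> vertex F s ->
  (forall u, 0 < u -> vertex F u -> fpar F u <> s) ->
  (forall v, vertex F v -> v <> s -> flab F v <= size w) ->
  (forall i, adv w i = adv w' i) ->
  (forall i, 1 <= i <= size w -> honest_idx w i -> i <= size w' /\ flab F s <> i) ->
  is_fork w (del F s).
Proof.
move=> [D [Fl F1 F2 F3 F4]] s0 Vs Ls Hl Ha Hh.
have Hhon : forall i, honest_idx w i = honest_idx w' i by move=> i; rewrite /honest_idx Ha.
split; first exact: dec_del s0 Vs D Ls.
split.
- move=> v Vv /=; apply: Hl; first by rewrite -(vertex_del s0 Vs).
  by apply/eqP; apply: bmp_neq.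
- by rewrite /= bmp0.
- move=> v v0 Vv /=; rewrite (par_del s0 Vs Ls Vv v0); apply: F2.
  + by rewrite bmp_pos.
  + by rewrite -(vertex_del s0 Vs).
- move=> i Hi Hon; have [Hi' Hne] := Hh i Hi Hon.
  have : 0 < fsize F by move: Vs; rewrite /vertex; lia.
  move=> fs0; change (fsize (del F s)) with (fsize F).-1; rewrite prednK //.
  have := F3 i (ltac:(lia)) (ltac:(by rewrite -Hhon)).
  rewrite (count_bmp _ (s:=s)) //.
  have -> : (flab F s == i) = false by apply/eqP.
  by rewrite addn0.
- move=> u v Vu Vv /= H1 H2 H3 H4.
  rewrite !(depth_del s0 Vs D Ls) //; apply: F4 => //; rewrite -?vertex_del // -?Hhon //.
Qed.

Definition emb (G F : fork) (e : nat -> nat) :=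
  (forall i, vertex G i -> [/\ vertex F (e i), depth G i = depth F (e i) & flab G i = flab F (e i)]) /\
  (forall i j, vertex G i -> (anc G i j <-> anc F (e i) (e j))).

Lemma emb_comp G F1 F e1 e2 : emb G F1 e1 -> emb F1 F e2 -> emb G F (fun i => e2 (e1 i)).
Proof.
move=> [H1 A1] [H2 A2]; split.
  move=> i Vi; have [V1 d1 l1] := H1 i Vi; have [V2 d2 l2] := H2 _ V1.
  by split=> //; rewrite ?d1 ?l1.
move=> i j Vi; rewrite A1 //; apply: A2; by have [] := H1 i Vi.
Qed.

Lemma emb_del F s : 0 < s -> vertex F s -> dec F ->
  (forall u, 0 < u -> vertex F u -> fpar F u <> s) -> emb (del F s) F (bmp s).
Proof.
move=> s0 Vs D Ls; split.
  by move=> i Vi; split; rewrite -?vertex_del ?depth_del.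
by move=> i j Vi; apply: anc_del.
Qed.

Lemma emb_id F : emb F F id.
Proof. by split. Qed.

Lemma fork_dec w F : is_fork w F -> dec F.
Proof. by case. Qed.

Lemma trim w : forall F, is_fork w F -> exists G e,
  [/\ is_fork w G, Defs.closed w G, emb G F e &
     forall v, vertex F v -> honest_vertex w F v -> exists i, vertex G i /\ e i = v].
Proof.
suff : forall N F, fsize F < N -> is_fork w F -> exists G e,
  [/\ is_fork w G, Defs.closed w G, emb G F e &
     forall v, vertex F v -> honest_vertex w F v -> exists i, vertex G i /\ e i = v].
  by move=> H F; apply: (H (fsize F).+1).
elim=> [|N IH] F // HN HF.
case: (classic (Defs.closed w F)) => Hc.
  exists F, id; split=> //.
  by move=> v Vv _; exists v.
have [v Hv] : exists v, ~ (leaf F v -> honest_vertex w F v).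
  by apply: not_all_ex_not.
have [[Vv Lv] /negP Hnv] := imply_to_and _ _ Hv.
move: Hnv; rewrite /honest_vertex negb_or => /andP [v0 Hadv].
have v0' : 0 < v by rewrite lt0n.
have D := fork_dec HF.
have HF' : is_fork w (del F v).
  apply: (del_fork HF) => //.
  - by move=> u Vu _; case: (HF) => _ [Fl _ _ _ _]; apply: Fl.
  - move=> i Hi Hon; split; first lia.
    by move=> E; move: Hadv; rewrite E Hon.
have [G [e [HG HGc He Hr]]] := IH (del F v) (ltac:(move: Vv; rewrite /vertex /=; lia)) HF'.
exists G, (fun i => bmp v (e i)); split=> //.
  exact: emb_comp He (emb_del v0' Vv D Lv).
move=> u Vu Hu.
have uv : u != v by apply/eqP => E; move: Hu; rewrite E /honest_vertex (negbTE v0) (negbTE Hadv).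
have Vu' : vertex (del F v) (unb v u) by rewrite vertex_del // unbK.
have Hu' : honest_vertex w (del F v) (unb v u).
  move: Hu; rewrite /honest_vertex /= unbK //.
  case/orP=> [/eqP ->|->]; last by rewrite orbT.
  by rewrite /unb v0'.
have [i [Vi Ei]] := Hr _ Vu' Hu'.
by exists i; split=> //; rewrite Ei unbK.
Qed.


Lemma depth_aux_ext par1 par2 f v :
  (forall u, 0 < u -> u <= v -> par1 u = par2 u /\ par1 u < u) ->
  depth_aux par1 f v = depth_aux par2 f v.
Proof.
elim: f v => [|f IH] v H //=.
case: eqP => // /eqP v0; have [E L] := H v (ltac:(lia)) (leqnn v).
rewrite E; congr S; apply: IH => u u0 uv; apply: H => //; lia.
Qed.

Lemma count_iotaS (p : pred nat) m : count p (iota 0 m.+1) = count p (iota 0 m) + p m.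
Proof. by rewrite -addn1 iotaD count_cat /= addn0. Qed.

Definition AL (F : fork) p l := Fork (fsize F).+1
  (fun v => if v == (fsize F).+1 then p else fpar F v)
  (fun v => if v == (fsize F).+1 then l else flab F v).

Lemma adv_rcons w b i : 0 < i <= size w -> adv (rcons w b) i = adv w i.
Proof. move=> H; rewrite /adv nth_rcons; have -> : i.-1 < size w by lia. by []. Qed.

Lemma adv_last w b : adv (rcons w b) (size w).+1 = b.
Proof. by rewrite /adv nth_rcons /= ltnn eqxx. Qed.

Lemma flab_pos w F v : is_fork w F -> 0 < v -> vertex F v -> 0 < flab F v.
Proof. move=> [_ [_ _ F2 _ _]] v0 Vv; have := F2 v v0 Vv; lia. Qed.

Lemma fork_exists w : exists F, is_fork w F /\ Defs.closed w F.
Proof.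
elim/last_ind: w => [|w b [F [HF HC]]].
  exists (Fork 0 (fun _ => 0) (fun _ => 0)); split.
    split; first by move=> v v0; rewrite /vertex /=; lia.
    split=> //=.
    - by move=> v v0; rewrite /vertex /=; lia.
    - by move=> i; lia.
  by move=> v [Vv _]; move: Vv; rewrite /vertex /= leqn0 => /eqP ->.
have D : dec F by case: HF.
case: HF => [_ [Fl F1 F2 F3 F4]].
have Hon : forall b i, 0 < i <= size w -> honest_idx (rcons w b) i = honest_idx w i.
  by move=> b' i Hi; rewrite /honest_idx adv_rcons.
case: b.
  have {}Hon := Hon true.
  exists F; split.
    split=> //; split=> //.
    - move=> v Vv; rewrite size_rcons; have := Fl v Vv; lia.
    - move=> i; rewrite size_rcons => Hi Hh; case: (ltnP i (size w).+1) => Hi'.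
        by apply: F3; [lia | rewrite -Hon //; lia].
      have Ei : i = (size w).+1 by lia.
      by move: Hh; rewrite Ei /honest_idx adv_last.
    - move=> u v Vu Vv H1 H2 H3 H4; have := Fl v Vv; have := Fl u Vu => L1 L2.
      apply: F4 => //; rewrite -Hon //; lia.
  move=> v Lv; have := HC v Lv; rewrite /honest_vertex.
  case: (posnP v) => [->|v0] //=; have := flab_pos (conj D (And5 Fl F1 F2 F3 F4)) v0 (proj1 Lv).
  by move=> P; rewrite Hon //; have := Fl v (proj1 Lv); lia.
have {}Hon := Hon false.
have [z [Vz Hz]] := height_ex F.
set N := (fsize F).+1.
have eN : N = (fsize F).+1 by [].
have VN : forall v, vertex F v -> v == (fsize F).+1 = false by move=> v; rewrite /vertex => H; apply/eqP; lia.
have D' : dec (AL F z (size w).+1).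
  move=> v v0; rewrite /vertex /= => Vv; case: eqP => [->|/eqP vN].
    by move: Vz; rewrite /vertex; lia.
  by apply: D => //; rewrite /vertex; lia.
have dold : forall v, vertex F v -> depth (AL F z (size w).+1) v = depth F v.
  move=> v Vv; apply: depth_aux_ext => u u0 uv /=.
  have Vu : vertex F u by move: Vv; rewrite /vertex; lia.
  by rewrite VN //; split=> //; apply: D.
have dN : depth (AL F z (size w).+1) N = (depth F z).+1.
  rewrite (depthE D') /= ?eqxx //; last by rewrite /vertex.
  by rewrite dold.
exists (AL F z (size w).+1); split.
  split=> //; split.
  - move=> v; rewrite /vertex /= size_rcons; case: eqP => [->|/eqP vN Vv] //.
    have := Fl v (ltac:(rewrite /vertex; lia)); lia.
  - by rewrite /= F1.
  - move=> v v0; rewrite /vertex /=; case: (v =P (fsize F).+1) => [->|/eqP vN] Vv.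
      rewrite (VN z Vz); have := Fl z Vz; lia.
    have Vv' : vertex F v by rewrite /vertex; lia.
    rewrite ?(negbTE vN) VN; [exact: F2 | exact: vertex_par].
  - move=> i; rewrite size_rcons => Hi Hh.
    change (fsize (AL F z (size w).+1)) with (fsize F).+1.
    rewrite count_iotaS [X in _ + X]/= eqxx.
    rewrite (@eq_in_count _ _ (fun v => flab F v == i)); last first.
      by move=> v; rewrite mem_iota => Hv /=; rewrite VN // /vertex; lia.
    case: (ltnP i (size w).+1) => Hi'.
      rewrite F3 //; [|lia|rewrite -Hon //; lia].
      by have -> : ((size w).+1 == i) = false by apply/eqP; lia.
    have Ei : i = (size w).+1 by lia.
    rewrite Ei eqxx (@eq_in_count _ _ pred0) ?count_pred0 //.
    move=> v; rewrite mem_iota => Hv; have := Fl v (ltac:(rewrite /vertex; lia)).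
    by move=> L; apply/negbTE/eqP; lia.
  - move=> u v; rewrite /vertex /=.
    case: (u =P N) => [->|/eqP uN]; case: (v =P N) => [->|/eqP vN] Vu Vv //=.
    + by move=> _ _ _; rewrite ltnn.
    + move=> _ _ _; have := Fl v (ltac:(rewrite /vertex; lia)); lia.
    + move=> _ _ _ _; rewrite dN dold; last by rewrite /vertex; lia.
      have := height_ge (ltac:(rewrite /vertex; lia) : vertex F u); lia.
    + move=> H1 H2 H3 H4; rewrite !dold; try (rewrite /vertex; lia).
      have := Fl u (ltac:(rewrite /vertex; lia)); have := Fl v (ltac:(rewrite /vertex; lia)) => L1 L2.
      apply: F4; try (rewrite /vertex; lia); rewrite -?Hon //; lia.
move=> v [Vv Lv]; rewrite /honest_vertex /=.
case: (v =P N) => [->|/eqP vN].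
  by rewrite ?eqxx /= /honest_idx adv_last.
have Vv' : vertex F v by move: Vv; rewrite /vertex /=; lia.
have : honest_vertex w F v.
  apply: HC; split=> // c c0 Vc E; apply: (Lv c c0); first by move: Vc; rewrite /vertex /=; lia.
  by rewrite /= VN.
rewrite /honest_vertex; case: (posnP v) => [->|v0] //=.
have := flab_pos (conj D (And5 Fl F1 F2 F3 F4)) v0 Vv'; have := Fl v Vv'.
by move=> L1 L2; rewrite Hon //; lia.
Qed.


Lemma reach_le w F t : (reach w F t <= (size w)%:Z)%R.
Proof.
rewrite /reach /reserve; have := count_size (fun i => adv w i && (flab F t < i)) (iota 1 (size w)).
rewrite size_iota; lia.
Qed.

Lemma disj00 k F : disjoint_over k F 0 0.
Proof.
move=> u u0 _ _; have E : (0 == u) = false by apply/eqP; lia.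
by rewrite /on_tine /= E.
Qed.

Lemma mu_fork_spec x y F :
 (exists t1 t2, [/\ vertex F t1, vertex F t2, disjoint_over (size x) F t1 t2 &
    mu_fork x y F = Order.min (reach (x ++ y) F t1) (reach (x ++ y) F t2)]) /\
 (forall t1 t2, vertex F t1 -> vertex F t2 -> disjoint_over (size x) F t1 t2 ->
    (Order.min (reach (x ++ y) F t1) (reach (x ++ y) F t2) <= mu_fork x y F)%R).
Proof.
rewrite /mu_fork.
set P := (fun r => exists t1 t2, [/\ vertex F t1, vertex F t2,
          disjoint_over (size x) F t1 t2 &
          r = Order.min (reach (x ++ y) F t1) (reach (x ++ y) F t2)]).
have A1 : P (Order.min (reach (x ++ y) F 0) (reach (x ++ y) F 0)).
  by exists 0, 0; split=> //; apply: disj00.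
have A2 : forall k, P k -> (k <= (size (x ++ y))%:Z)%R.
  move=> k [t1 [t2 [_ _ _ ->]]]; have := reach_le (x ++ y) F t1; lia.
have [Pm Hm] := maxZP (bounded_max A1 A2).
split; first by case: Pm => t1 [t2 [*]]; exists t1, t2.
by move=> t1 t2 V1 V2 Dj; apply: Hm; exists t1, t2.
Qed.

Lemma rho_fork_spec w F :
  (exists t, vertex F t /\ rho_fork w F = reach w F t) /\
  (forall t, vertex F t -> (reach w F t <= rho_fork w F)%R).
Proof.
rewrite /rho_fork.
set P := (fun r => exists t, vertex F t /\ r = reach w F t).
have A1 : P (reach w F 0) by exists 0.
have A2 : forall k, P k -> (k <= (size w)%:Z)%R.
  move=> k [t [_ ->]]; exact: reach_le.
have [Pm Hm] := maxZP (bounded_max A1 A2).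
split; first by case: Pm => t [? ?]; exists t.
by move=> t Vt; apply: Hm; exists t.
Qed.

Lemma mu_spec x y :
  (exists F, [/\ is_fork (x ++ y) F, Defs.closed (x ++ y) F & mu x y = mu_fork x y F]) /\
  (forall F, is_fork (x ++ y) F -> Defs.closed (x ++ y) F -> (mu_fork x y F <= mu x y)%R).
Proof.
have [F0 [H0 C0]] := fork_exists (x ++ y).
rewrite /mu.
set P := (fun r => exists F, [/\ is_fork (x ++ y) F, Defs.closed (x ++ y) F & r = mu_fork x y F]).
have A1 : P (mu_fork x y F0) by exists F0.
have A2 : forall k, P k -> (k <= (size (x ++ y))%:Z)%R.
  move=> k [F [_ _ ->]]; have [[t1 [t2 [_ _ _ ->]]] _] := mu_fork_spec x y F.
  have := reach_le (x ++ y) F t1; lia.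
have [Pm Hm] := maxZP (bounded_max A1 A2).
split; first by case: Pm => F [*]; exists F.
by move=> F HF CF; apply: Hm; exists F.
Qed.

Lemma rho_spec w F : is_fork w F -> Defs.closed w F -> (rho_fork w F <= rho w)%R.
Proof.
move=> HF CF; rewrite /rho.
set P := (fun r => exists F, [/\ is_fork w F, Defs.closed w F & r = rho_fork w F]).
have A1 : P (rho_fork w F) by exists F.
have A2 : forall k, P k -> (k <= (size w)%:Z)%R.
  move=> k [G [_ _ ->]]; have [[t [_ ->]] _] := rho_fork_spec w G; exact: reach_le.
have [Pm Hm] := maxZP (bounded_max A1 A2).
exact: Hm.
Qed.


Definition R (W : seq bool) (l : nat) := count (fun i => adv W i && (l < i)) (iota 1 (size W)).

Lemma reserveE W F t : reserve W F t = R W (flab F t).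
Proof. by []. Qed.

Lemma count_split (p q : pred nat) s : (forall i, p i -> q i) ->
  count q s = count p s + count (fun i => q i && ~~ p i) s.
Proof.
move=> H; elim: s => //= a s IH; rewrite IH.
case: (boolP (p a)) => Pa; first by rewrite (H a Pa) /=; lia.
case: (q a) => /=; lia.
Qed.

Lemma R_lt W l l' : l < l' -> 0 < l' <= size W -> adv W l' -> R W l' + 1 <= R W l.
Proof.
move=> ll Hl Ha; rewrite [R W l]/R (@count_split (fun i => adv W i && (l' < i))).
  have : 0 < count (fun i => (adv W i && (l < i)) && ~~ (adv W i && (l' < i))) (iota 1 (size W)).
    rewrite -has_count; apply/hasP; exists l'.
      by rewrite mem_iota; lia.
    by rewrite Ha ll ltnn.
  rewrite /R; lia.
by move=> i /andP [-> H]; apply/andP; split=> //; lia.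
Qed.

Lemma R_big W l : size W <= l -> R W l = 0.
Proof.
move=> H; rewrite /R (@eq_in_count _ _ pred0) ?count_pred0 // => i.
rewrite mem_iota => Hi /=; apply/negbTE; rewrite negb_and; apply/orP; right; lia.
Qed.

Lemma honest_anc W F t : is_fork W F -> vertex F t -> exists u,
  [/\ anc F t u, honest_vertex W F u, depth F u <= depth F t &
      R W (flab F t) + (depth F t - depth F u) <= R W (flab F u)].
Proof.
move=> HF; have D := fork_dec HF; case: (HF) => _ [Fl F1 F2 F3 F4].
elim/ltn_ind: t => t IH Vt.
case: (boolP (honest_vertex W F t)) => Ht.
  exists t; split=> //; [constructor | lia].
move: Ht; rewrite /honest_vertex negb_or => /andP [t0 /negbNE Ha].
have t0' : 0 < t by rewrite lt0n.
have Vp := vertex_par D t0' Vt.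
have [u [Au Hu du Ru]] := IH _ (D t t0' Vt) Vp.
exists u; split=> //.
- exact: ancS.
- rewrite (depthE D Vt) (negbTE t0); lia.
have Hl : 0 < flab F t <= size W by have := Fl t Vt; have := flab_pos HF t0' Vt; lia.
have := R_lt (F2 t t0' Vt) Hl Ha.
rewrite (depthE D Vt) (negbTE t0); lia.
Qed.


Lemma iota_rc m n : iota m n.+1 = iota m n ++ [:: m + n].
Proof. by rewrite -addn1 iotaD. Qed.

Unset Implicit Arguments.
Theorem proposition2 (x y : seq bool) :
  0 < size y ->
  (((mu x y < rho (x ++ y))%R /\ mu x y = 0%R) -> (mu x (rcons y false) <= 0)%R) /\
  (~ ((mu x y < rho (x ++ y))%R /\ mu x y = 0%R) -> (mu x (rcons y false) <= mu x y - 1)%R).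
Proof.
move=> _.
have [[F' [HF' CF' Emu0]] _] := mu_spec x (rcons y false).
have [[t1 [t2 [V1 V2 Dj Em]]] _] := mu_fork_spec x (rcons y false) F'.
rewrite Em in Emu0; rewrite Emu0; clear Emu0 Em.
have Ew0 : x ++ rcons y false = rcons (x ++ y) false by rewrite rcons_cat.
rewrite Ew0 in HF' CF' Dj *.
have [_ MU] := mu_spec x y.
set w := x ++ y in HF' CF' Dj MU *.
have kn : size x <= size w by rewrite /w size_cat; lia.
set n := size w in kn *.
set k := size x in Dj kn *.
set w0 := rcons w false in HF' CF' Dj *.
have sw0 : size w0 = n.+1 by rewrite /w0 size_rcons.
have advE : forall i, adv w0 i = adv w i.
  move=> i; rewrite /adv /w0 nth_rcons; case: ltnP => // H.
  by rewrite nth_default //; case: eqP.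
have honE : forall i, honest_idx w0 i = honest_idx w i by move=> i; rewrite /honest_idx advE.
have RE : forall l, R w0 l = R w l.
  move=> l; rewrite /R sw0 iota_rc count_cat.
  have -> : count (fun i => adv w0 i && (l < i)) [:: 1 + n] = 0.
    by rewrite /= advE /adv nth_default.
  by rewrite addn0; apply: eq_count => i; rewrite advE.
have D' := fork_dec HF'.
case: (HF') => _ [Fl F1 F2 F3 F4].
have [h Vh Lh] : exists2 h, vertex F' h & flab F' h = n.+1.
  have := F3 n.+1 (ltac:(rewrite sw0; lia)) (ltac:(by rewrite honE /honest_idx /adv nth_default)).
  move=> C; have : 0 < count (fun v => flab F' v == n.+1) (iota 0 (fsize F').+1) by rewrite C.
  rewrite -has_count => /hasP [h]; rewrite mem_iota => Hh /eqP E; exists h => //.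
have h0 : 0 < h by case: (posnP h) => // E; move: Lh; rewrite E F1.
have Lfh : forall u, 0 < u -> vertex F' u -> fpar F' u <> h.
  move=> u u0 Vu E; have := F2 u u0 Vu; have := Fl u Vu; rewrite E Lh sw0; lia.
have uniq_h : forall v, vertex F' v -> v <> h -> flab F' v <= n.
  move=> v Vv vh; have := Fl v Vv; rewrite sw0 => L.
  case: (ltnP (flab F' v) n.+1) => L2; first lia.
  have Ev : flab F' v = n.+1 by lia.
  have : size [:: h; v] <= size (filter (fun v => flab F' v == n.+1) (iota 0 (fsize F').+1)).
    apply: uniq_leq_size.
      by rewrite /= inE andbT; apply/eqP => E; apply: vh.
    move=> z; rewrite !inE mem_filter mem_iota => /orP [/eqP ->|/eqP ->].
      by rewrite Lh eqxx /=; move: Vh; rewrite /vertex; lia.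
    by rewrite Ev eqxx /=; move: Vv; rewrite /vertex; lia.
  rewrite size_filter F3 //; [ by rewrite sw0; lia | by rewrite honE /honest_idx /adv nth_default].
have HF1 : is_fork w (del F' h).
  apply: (del_fork HF') => //.
  - move=> i Hi Hon; rewrite sw0; split; first lia.
    by rewrite Lh => E; rewrite -E /n in Hi; lia.
have [G [e2 [HG CG EG RG]]] := trim HF1.
have DG := fork_dec HG.
set e := fun i => bmp h (e2 i).
have Emb : emb G F' e := emb_comp EG (emb_del h0 Vh D' Lfh).
case: Emb => Eme Ema.
have rangeF : forall v, vertex F' v -> honest_vertex w0 F' v -> v <> h ->
    exists2 g, vertex G g & e g = v.
  move=> v Vv Hv vh.
  have vh' : v != h by apply/eqP.
  have Vv' : vertex (del F' h) (unb h v) by rewrite (vertex_del h0 Vh) unbK.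
  have Hv' : honest_vertex w (del F' h) (unb h v).
    move: Hv; rewrite /honest_vertex /= unbK // honE.
    case/orP=> [/eqP ->|->]; last by rewrite orbT.
    by rewrite /unb h0.
  have [g [Vg Eg]] := RG _ Vv' Hv'.
  by exists g => //; rewrite /e Eg unbK.
have dh0 : 0 < depth F' h by rewrite (depthE D' Vh); case: eqP => //; lia.
have HGh : height G < depth F' h.
  have [z [Vz Hz]] := height_ex G.
  have Lz : leaf G z.
    split=> // c c0 Vc E; have := height_ge Vc; rewrite (depthE DG Vc).
    have -> : (c == 0) = false by apply/eqP; lia.
    by rewrite E Hz; lia.
  have := CG z Lz; rewrite /honest_vertex; case: (posnP z) => [z0|z0] /=.
    by move=> _; rewrite -Hz z0; exact: dh0.
  move=> Hz'; have [Vez dez lez] := Eme z Vz.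
  rewrite -Hz dez; apply: F4 => //.
  - by rewrite -lez; apply: (flab_pos HG).
  - by rewrite -lez honE.
  - by rewrite Lh honE /honest_idx /adv nth_default.
  - by rewrite -lez Lh; case: (HG) => _ [FlG _ _ _ _]; have := FlG z Vz; lia.
have Hp := height_ge Vh.
have bound : forall t, vertex F' t -> t <> h -> exists2 g, vertex G g &
    anc F' t (e g) /\ (reach w0 F' t <= reach w G g - 1)%R.
  move=> t Vt th.
  have [u [Au Hu du Ru]] := honest_anc HF' Vt.
  have uh : u <> h by move=> E; apply: th; rewrite E in Au; exact: (anc_leaf D' Au Vt (conj Vh Lfh)).
  have Vu := anc_vertex D' Au Vt.
  have [g Vg Eg] := rangeF u Vu Hu uh.
  exists g => //; split; first by rewrite Eg.
  have [_ dg lg] := Eme g Vg.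
  have := height_ge Vg; have := height_ge Vt.
  rewrite /reach /gap !reserveE lg dg Eg -RE; lia.
have boundh : exists2 g, vertex G g &
    anc F' h (e g) /\ (0 <= reach w G g)%R /\ (reach w0 F' h <= 0)%R.
  have Vp := vertex_par D' h0 Vh.
  have [u [Au Hu du Ru]] := honest_anc HF' Vp.
  have Vu := anc_vertex D' Au Vp.
  have uh : u <> h by have := anc_le D' Au Vp; have := D' h h0 Vh; lia.
  have [g Vg Eg] := rangeF u Vu Hu uh.
  exists g => //; split; first by rewrite Eg; apply: ancS.
  have [_ dg lg] := Eme g Vg.
  have := height_ge Vg.
  have dhE : depth F' h = (depth F' (fpar F' h)).+1.
    by rewrite (depthE D' Vh); case: eqP => //; lia.
  split.
    rewrite /reach /gap reserveE lg dg Eg -RE; lia.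
  rewrite /reach /gap reserveE Lh R_big ?sw0 //; lia.
have disjG : forall g1 g2, vertex G g1 -> vertex G g2 -> anc F' t1 (e g1) -> anc F' t2 (e g2) ->
    disjoint_over k G g1 g2.
  move=> g1 g2 Vg1 Vg2 A1 A2 z z0 Vz kz.
  apply/negP => /andP [/(on_tineP _ DG Vg1) Z1 /(on_tineP _ DG Vg2) Z2].
  have [Vez _ lez] := Eme z Vz.
  have ez0 : 0 < e z.
    case: (posnP (e z)) => // E; move: kz; rewrite lez E F1; lia.
  have kz' : k < flab F' (e z) by rewrite -lez.
  move/negP: (Dj (e z) ez0 Vez kz'); apply; apply/andP; split; apply/(on_tineP _ D' _) => //.
  - exact: anc_trans A1 ((Ema g1 z Vg1).1 Z1).
  - exact: anc_trans A2 ((Ema g2 z Vg2).1 Z2).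
have MUG : forall g1 g2, vertex G g1 -> vertex G g2 -> disjoint_over k G g1 g2 ->
    (Order.min (reach w G g1) (reach w G g2) <= mu x y)%R.
  move=> g1 g2 Vg1 Vg2 Dg; apply: le_trans (MU G HG CG).
  have [_ H] := mu_fork_spec x y G; exact: H.
have RHO : forall g, vertex G g -> (reach w G g <= rho w)%R.
  move=> g Vg; apply: le_trans (rho_spec HG CG).
  have [_ H] := rho_fork_spec w G; exact: H.
have hh : on_tine F' h h by apply/(on_tineP _ D' Vh); constructor.
case: (t1 =P h) => [E1|N1]; case: (t2 =P h) => [E2|N2].
- exfalso; move: (Dj h h0 Vh (ltac:(rewrite Lh; lia))).
  by rewrite E1 E2 hh.
- have [g1 Vg1 [A1 [r1 r1']]] := boundh.
  have [g2 Vg2 [A2 r2]] := bound t2 V2 N2.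
  rewrite -E1 in A1 r1'.
  have := MUG g1 g2 Vg1 Vg2 (disjG g1 g2 Vg1 Vg2 A1 A2).
  have := RHO g2 Vg2.
  lia.
- have [g2 Vg2 [A2 [r2 r2']]] := boundh.
  have [g1 Vg1 [A1 r1]] := bound t1 V1 N1.
  rewrite -E2 in A2 r2'.
  have := MUG g1 g2 Vg1 Vg2 (disjG g1 g2 Vg1 Vg2 A1 A2).
  have := RHO g1 Vg1.
  lia.
- have [g1 Vg1 [A1 r1]] := bound t1 V1 N1.
  have [g2 Vg2 [A2 r2]] := bound t2 V2 N2.
  have := MUG g1 g2 Vg1 Vg2 (disjG g1 g2 Vg1 Vg2 A1 A2).
  lia.
Qed.
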